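(* For every $M,N\ge 0$, the poset of shuffles $W_{MN}$ is locally rank-symmetric: for every interval $[u,v]$ of $W_{MN}$ and every $r\ge 0$, the number of elements of $[u,v]$ of rank $\rho(u)+r$ equals the number of elements of $[u,v]$ of rank $\rho(v)-r$.
   Context: Let $\mathcal{A}=\{a_1,\dots,a_M\}$ and $\mathcal{X}=\{x_1,\dots,x_N\}$ be disjoint finite sets. A shuffle word is a word (possibly empty) with distinct letters from $\mathcal{A}\cup\mathcal{X}$ in which the letters from $\mathcal{A}$ appear in increasing order of subscripts and the letters from $\mathcal{X}$ appear in increasing order of subscripts. The poset of shuffles $W_{MN}$ is the set of shuffle words ordered by the reflexive-transitive closure of: $w$ is covered by $w'$ iff $w'$ is obtained from $w$ by deleting a letter of $\mathcal{A}$ or inserting a letter of $\mathcal{X}$. It is ranked with rank function $\rho(w)=(M-\#(\{w\}\cap\mathcal{A}))+\#(\{w\}\cap\mathcal{X})$, where $\{w\}$ is the set of letters of $w$. *)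

(* Defs.v *)
From mathcomp Require Import all_boot.
Set Implicit Arguments. Unset Strict Implicit. Unset Printing Implicit Defensive.

Section Shuffles.
Variables M N : nat.

(* Letters: inl i is a_{i+1} (i < M), inr j is x_{j+1} (j < N). *)
Definition letter := ('I_M + 'I_N)%type.

Definition subA (l : letter) : option nat := if l is inl i then Some (val i) else None.
Definition subX (l : letter) : option nat := if l is inr j then Some (val j) else None.

Definition shuffle (w : seq letter) : bool :=
  [&& uniq w, sorted ltn (pmap subA w) & sorted ltn (pmap subX w)].

(* Words of length <= M + N (every shuffle word has this property),
   packed as a finite type. *)
Definition bword := {n : 'I_(M + N).+1 & n.-tuple letter}.
Definition bword_seq (t : bword) : seq letter := val (tagged t).

Definition W := {t : bword | shuffle (bword_seq t)}.
Definition word (w : W) : seq letter := bword_seq (val w).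

(* w is covered by w' iff w' is obtained from w by deleting a letter of A
   or inserting a letter of X (letters are distinct, so deleting the letter
   l is rem l). *)
Definition covered (w w' : W) : bool :=
  [exists i : 'I_M, (inl i \in word w) && (word w' == rem (inl i) (word w))] ||
  [exists j : 'I_N, (inr j \in word w') && (word w == rem (inr j) (word w'))].

Definition shle (u v : W) : bool := connect covered u v.

Definition rho (w : W) : nat :=
  (M - count (fun l => subA l != None) (word w)) + count (fun l => subX l != None) (word w).

End Shuffles.

(* Main.v *)
Require Import Defs.
From mathcomp Require Import all_boot zify.
Set Implicit Arguments. Unset Strict Implicit. Unset Printing Implicit Defensive.

Section Main.
Variables M N : nat.
Local Notation L := (letter M N).

Definition isA (l : L) : bool := subA l != None.
Definition isX (l : L) : bool := subX l != None.
Lemma isXE (l : L) : isX l = ~~ isA l. Proof. by case: l. Qed.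

Definition le (u w : seq L) : bool :=
  [&& all (fun l => isA l ==> (l \in u)) w, all (fun l => isX l ==> (l \in w)) u &
      [seq l <- u | l \in w] == [seq l <- w | l \in u]].

Lemma mem_cons_nin (l y : L) (s t : seq L) : l \notin t -> y \in t -> (y \in l :: s) = (y \in s).
Proof. move=> lt yt; rewrite in_cons; case: eqP => // E; by rewrite -E yt in lt. Qed.

Lemma le_cons2 (l : L) (u w : seq L) : l \notin u -> l \notin w -> le (l::u) (l::w) = le u w.
Proof.
move=> lu lw; rewrite /le /= !mem_head /= !implybT /= eqseq_cons eqxx /=.
rewrite (@eq_in_all _ _ (fun y => isA y ==> (y \in u)) w); last first.
  by move=> y yw /=; rewrite (mem_cons_nin _ lw yw).
rewrite (@eq_in_all _ _ (fun y => isX y ==> (y \in w)) u); last first.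
  by move=> y yu /=; rewrite (mem_cons_nin _ lu yu).
rewrite (@eq_in_filter _ (fun y => y \in l :: w) (fun y => y \in w) u); last first.
  by move=> y yu /=; rewrite (mem_cons_nin _ lu yu).
rewrite (@eq_in_filter _ (fun y => y \in l :: u) (fun y => y \in u) w) //.
by move=> y yw /=; rewrite (mem_cons_nin _ lw yw).
Qed.

Lemma le_consL (a : L) (u w : seq L) : isA a -> a \notin w -> a \notin u -> le (a::u) w = le u w.
Proof.
move=> Aa aw au; rewrite /le /= (negbTE aw) isXE Aa /=.
rewrite (@eq_in_all _ _ (fun y => isA y ==> (y \in u)) w); last first.
  by move=> y yw /=; rewrite (mem_cons_nin _ aw yw).
rewrite (@eq_in_filter _ (fun y => y \in a :: u) (fun y => y \in u) w) //.
by move=> y yw /=; rewrite (mem_cons_nin _ aw yw).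
Qed.

Lemma le_consR (x : L) (u w : seq L) : isX x -> x \notin u -> x \notin w -> le u (x::w) = le u w.
Proof.
move=> Xx xu xw; rewrite /le /= (negbTE xu) -[isA x]negbK -isXE Xx /=.
rewrite (@eq_in_all _ _ (fun y => isX y ==> (y \in w)) u); last first.
  by move=> y yu /=; rewrite (mem_cons_nin _ xu yu).
rewrite (@eq_in_filter _ (fun y => y \in x :: w) (fun y => y \in w) u) //.
by move=> y yu /=; rewrite (mem_cons_nin _ xu yu).
Qed.

Lemma le_refl (u : seq L) : le u u.
Proof.
rewrite /le eqxx andbT; apply/andP; split; apply/allP=> y yu; by rewrite yu implybT.
Qed.

Lemma le_trans (u w z : seq L) : le u w -> le w z -> le u z.
Proof.
case/and3P=> /allP Awu /allP Xuw /eqP Fuw; case/and3P=> /allP Azw /allP Xwz /eqP Fwz.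
have uzw : forall y, y \in u -> y \in z -> y \in w.
  move=> y yu yz; case Ay: (isA y); first by have := Azw y yz; rewrite Ay.
  by have := Xuw y yu; rewrite isXE Ay.
apply/and3P; split.
- apply/allP=> y yz; apply/implyP=> Ay.
  have yw := implyP (Azw y yz) Ay; exact: implyP (Awu y yw) Ay.
- apply/allP=> y yu; apply/implyP=> Xy.
  have yw := implyP (Xuw y yu) Xy; exact: implyP (Xwz y yw) Xy.
apply/eqP.
have -> : [seq l <- u | l \in z] = [seq l <- [seq l <- u | l \in w] | l \in z].
  rewrite -filter_predI; apply: eq_in_filter => y yu /=.
  by case yz: (y \in z); rewrite // (uzw y yu yz).
have -> : [seq l <- z | l \in u] = [seq l <- [seq l <- z | l \in w] | l \in u].
  rewrite -filter_predI; apply: eq_in_filter => y yz /=.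
  by case yu: (y \in u); rewrite // (uzw y yu yz).
rewrite Fuw -Fwz -!filter_predI; apply: eq_filter => y /=; by rewrite andbC.
Qed.

Lemma le_del (l : L) (s : seq L) : isA l -> le s [seq y <- s | predC1 l y].
Proof.
move=> Al; apply/and3P; split.
- by apply/allP=> y; rewrite mem_filter => /andP[_ ->]; rewrite implybT.
- apply/allP=> y ys; apply/implyP=> Xy; rewrite mem_filter ys andbT /=.
  by apply/eqP=> E; move: Xy; rewrite E isXE Al.
apply/eqP; rewrite -filter_predI; apply: eq_in_filter => y ys /=.
by rewrite mem_filter ys !andbT.
Qed.

Lemma le_ins (m : L) (s : seq L) : isX m -> le [seq y <- s | predC1 m y] s.
Proof.
move=> Xm; apply/and3P; split.
- apply/allP=> y ys; apply/implyP=> Ay; rewrite mem_filter ys andbT /=.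
  by apply/eqP=> E; move: Xm; rewrite -E isXE Ay.
- by apply/allP=> y; rewrite mem_filter => /andP[_ ->]; rewrite implybT.
apply/eqP; rewrite -filter_predI; apply: eq_in_filter => y ys /=.
by rewrite mem_filter ys !andbT.
Qed.


Definition Betw (u v w : seq L) := [&& uniq u, uniq v, uniq w, le u w & le w v].

Lemma T1 (a : L) u' v w' : isA a -> a \notin u' -> a \notin v -> a \notin w' ->
  Betw (a::u') v (a::w') = Betw u' v w'.
Proof.
move=> Aa au av aw; rewrite /Betw /= au aw le_cons2 // le_consL //.
Qed.

Lemma T2 (a : L) u' v w : isA a -> a \notin u' -> a \notin w ->
  Betw (a::u') v w = Betw u' v w.
Proof. by move=> Aa au aw; rewrite /Betw /= au le_consL. Qed.

Lemma T3 (x : L) u v' w' : isX x -> x \notin u -> x \notin v' -> x \notin w' ->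
  Betw u (x::v') (x::w') = Betw u v' w'.
Proof.
move=> Xx xu xv xw; rewrite /Betw /= xv xw le_cons2 // le_consR //.
Qed.

Lemma T4 (x : L) u v' w : isX x -> x \notin v' -> x \notin w ->
  Betw u (x::v') w = Betw u v' w.
Proof. by move=> Xx xv xw; rewrite /Betw /= xv le_consR. Qed.

Lemma T5 (c : L) u' v' w' : c \notin u' -> c \notin v' -> c \notin w' ->
  Betw (c::u') (c::v') (c::w') = Betw u' v' w'.
Proof. by move=> cu cv cw; rewrite /Betw /= cu cv cw !le_cons2. Qed.

Lemma memUV u v w (y : L) : Betw u v w -> y \in w -> (y \in u) || (y \in v).
Proof.
case/and5P=> _ _ _ /and3P[/allP H1 _ _] /and3P[_ /allP H2 _] yw.
case Ay: (isA y); first by rewrite (implyP (H1 y yw) Ay).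
by rewrite (implyP (H2 y yw)) ?orbT // isXE Ay.
Qed.

Lemma nin_out u v w (y : L) : Betw u v w -> y \notin u -> y \notin v -> y \notin w.
Proof.
move=> H yu yv; apply/negP=> yw; by move: (memUV H yw); rewrite (negbTE yu) (negbTE yv).
Qed.

Lemma delA u v w (y : L) : Betw u v w -> y \in u -> y \notin v -> isA y.
Proof.
case/and5P=> _ _ _ /and3P[_ /allP H1 _] /and3P[_ /allP H2 _] yu yv.
case Ay: (isA y) => //; have Xy : isX y by rewrite isXE Ay.
by rewrite (implyP (H2 y (implyP (H1 y yu) Xy)) Xy) in yv.
Qed.

Lemma insX u v w (y : L) : Betw u v w -> y \in v -> y \notin u -> isX y.
Proof.
case/and5P=> _ _ _ /and3P[/allP H1 _ _] /and3P[/allP H2 _ _] yv yu.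
rewrite isXE; apply/negP=> Ay.
by rewrite (implyP (H1 y (implyP (H2 y yv) Ay)) Ay) in yu.
Qed.


Lemma commW u v w (y : L) : Betw u v w -> y \in u -> y \in v -> y \in w.
Proof.
case/and5P=> _ _ _ /and3P[_ /allP H1 _] /and3P[/allP H2 _ _] yu yv.
case Ay: (isA y); last by apply: (implyP (H1 y yu)); rewrite isXE Ay.
exact: (implyP (H2 y yv) Ay).
Qed.

Lemma filter_head (s t : seq L) c s' l t' :
  [seq y <- s | y \in t] = [seq y <- t | y \in s] -> s = c :: s' -> t = l :: t' ->
  c \in t -> l \in s -> c = l.
Proof. by move=> E Es Et ct ls; move: E; rewrite {1}Es {2}Et /= ct ls => -[]. Qed.

Lemma headU (c l : L) u' v w' : Betw (c::u') v (l::w') -> c \in l::w' -> l \in c::u' -> c = l.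
Proof.
case/and5P=> _ _ _ /and3P[_ _ /eqP E] _ cw lu; exact: (filter_head E erefl erefl cw lu).
Qed.

Lemma headV (c l : L) u v' w' : Betw u (c::v') (l::w') -> c \in l::w' -> l \in c::v' -> c = l.
Proof.
case/and5P=> _ _ _ _ /and3P[_ _ /eqP E] cw lv; symmetry.
exact: (filter_head E erefl erefl lv cw).
Qed.

Lemma Betw_nil w : Betw [::] [::] w -> w = [::].
Proof.
case: w => // y w H; by move: (memUV H (mem_head y w)).
Qed.


Definition hdel (u v : seq L) := if u is a :: _ then a \notin v else false.
Definition hins (u v : seq L) := if v is x :: _ then x \notin u else false.
Definition hd_is (w : seq L) (a : L) : bool := if w is b :: _ then b == a else false.

Fixpoint phi (n : nat) (u v w : seq L) {struct n} : seq L :=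
  if n is n'.+1 then
    if hdel u v && hins u v then
      (if u is a :: u' then if v is x :: v' then
         if x \notin w then x :: phi n' u v' w
         else if hd_is w x then phi n' u v' (behead w)
         else if hd_is w a then
           (if hd_is (behead w) x then a :: x :: phi n' u' v' (behead (behead w))
            else phi n' u' v (behead w))
         else a :: phi n' u' v w
       else w else w)
    else if hdel u v then
      (if u is a :: u' then
         (if hd_is w a then phi n' u' v (behead w) else a :: phi n' u' v w) else w)
    else if hins u v then
      (if v is x :: v' then
         (if hd_is w x then phi n' u v' (behead w) else x :: phi n' u v' w) else w)
    else (if u is a :: u' then (if v is _ :: v' then a :: phi n' u' v' (behead w) else w) else w)
  else w.

Lemma hd_isP (w : seq L) a : hd_is w a -> w = a :: behead w.
Proof. by case: w => //= b w /eqP ->. Qed.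

Ltac ih_tac IH HB Hsz n :=
  let T := type of HB in
  match T with is_true (Betw ?u ?v ?w) =>
    let Hs := fresh "Hs" in
    assert (Hs : size u + size v <= n) by (clear - Hsz; simpl in Hsz |- *; lia);
    have := IH u v w Hs HB; clear Hs
  end.
Tactic Notation "ihh" constr(IH) constr(HB) constr(Hsz) constr(n) ident(H) := ih_tac IH HB Hsz n; move=> H.

Lemma phi_Betw n u v w : size u + size v <= n -> Betw u v w -> Betw u v (phi n u v w).
Proof.
elim: n u v w => [|n IH] u v w.
  by case: u => //; case: v.
move=> Hsz HB /=.
case Hd: (hdel u v); case Hi: (hins u v) => /=.
- move: Hd Hi Hsz HB; case: u => [|a u'] //; case: v => [|x v'] //= Hd Hi Hsz HB.
  have Aa : isA a := delA HB (mem_head _ _) Hd.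
  have Xx : isX x := insX HB (mem_head _ _) Hi.
  move: (HB) => /and5P[Uu Uv Uw _ _].
  move: Uu Uv; rewrite !cons_uniq => /andP[au' _] /andP[xv' _].
  move: (Hd) (Hi); rewrite !in_cons !negb_or => /andP[ax av'] /andP[xa xu'].
  case xw: (x \in w) => /=; last first.
    have HB' : Betw (a::u') v' w by rewrite -(T4 _ Xx xv') ?xw.
    ihh IH HB' Hsz n H.
    by rewrite T3 //; apply: nin_out H _ xv'.
  case Hwx: (hd_is w x).
    move: HB Uw xw; rewrite (hd_isP Hwx) => HB Uw xw /=.
    move: Uw; rewrite cons_uniq => /andP[xw' _].
    rewrite T3 // in HB.
    ihh IH HB Hsz n H.
    by rewrite T4 //; apply: nin_out H _ xv'.
  case Hwa: (hd_is w a).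
    move: HB Uw xw Hwx; rewrite (hd_isP Hwa) => HB Uw xw Hwx /=.
    move: Uw; rewrite cons_uniq => /andP[aw' Uw'].
    case Hwx2: (hd_is (behead w) x).
      move: HB aw' Uw'; rewrite (hd_isP Hwx2) => HB aw' Uw' /=.
      move: Uw'; rewrite cons_uniq => /andP[xw'' _].
      rewrite T1 // T3 // in HB.
      ihh IH HB Hsz n H.
      have xz := nin_out H xu' xv'.
      rewrite T1 //; first by rewrite T3.
      by rewrite in_cons negb_or ax; apply: nin_out H au' av'.
    rewrite T1 // in HB.
    ihh IH HB Hsz n H.
    by rewrite T2 //; apply: nin_out H au' Hd.
  have aw : a \notin w.
    apply/negP=> aw; move: HB Hwa Hwx xw aw Uw; case: w => // l w' HB /= la lx xw aw _.
    case/orP: (memUV HB (mem_head l w')) => H.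
      by move: la; rewrite (headU HB aw H) eqxx.
    by move: lx; rewrite (headV HB xw H) eqxx.
  rewrite T2 // in HB.
  ihh IH HB Hsz n H.
  by rewrite T1 //; apply: nin_out H au' Hd.
- move: Hd Hi Hsz HB; case: u => [|a u'] //= Hd Hi Hsz HB.
  have Aa : isA a := delA HB (mem_head _ _) Hd.
  move: (HB) => /and5P[Uu Uv Uw _ _].
  move: Uu; rewrite cons_uniq => /andP[au' _].
  case Hwa: (hd_is w a).
    move: HB Uw; rewrite (hd_isP Hwa) => HB Uw /=.
    move: Uw; rewrite cons_uniq => /andP[aw' Uw'].
    rewrite T1 // in HB.
    ihh IH HB Hsz n H.
    by rewrite T2 //; apply: nin_out H au' Hd.
  have aw : a \notin w.
    apply/negP=> aw; move: HB Hwa aw Uw; case: w => // l w' HB /= la aw _.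
    case/orP: (memUV HB (mem_head l w')) => H.
      by move: la; rewrite (headU HB aw H) eqxx.
    move: Hi H HB; case: v Hd Hsz Uv => // x v' Hd _ _ /= /negbFE xu H HB.
    have xw := commW HB xu (mem_head _ _).
    have Exl := headV HB xw H; subst l.
    by move: la; rewrite (headU HB aw xu) eqxx.
  rewrite T2 // in HB.
  ihh IH HB Hsz n H.
  by rewrite T1 //; apply: nin_out H au' Hd.
- move: Hd Hi Hsz HB; case: v => [|x v'] //= Hd Hi Hsz HB.
  have Xx : isX x := insX HB (mem_head _ _) Hi.
  move: (HB) => /and5P[Uu Uv Uw _ _].
  move: Uv; rewrite cons_uniq => /andP[xv' _].
  case Hwx: (hd_is w x).
    move: HB Uw; rewrite (hd_isP Hwx) => HB Uw /=.
    move: Uw; rewrite cons_uniq => /andP[xw' Uw'].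
    rewrite T3 // in HB.
    ihh IH HB Hsz n H.
    by rewrite T4 //; apply: nin_out H Hi xv'.
  have xw : x \notin w.
    apply/negP=> xw; move: HB Hwx xw Uw; case: w => // l w' HB /= lx xw _.
    case/orP: (memUV HB (mem_head l w')) => H; last first.
      by move: lx; rewrite (headV HB xw H) eqxx.
    move: Hd H HB; case: u Hi Hsz Uu => // a u' Hi _ _ /= /negbFE av H HB.
    have aw := commW HB (mem_head _ _) av.
    have Eal := headU HB aw H; subst l.
    by move: lx; rewrite (headV HB xw av) eqxx.
  rewrite T4 // in HB.
  ihh IH HB Hsz n H.
  by rewrite T3 //; apply: nin_out H Hi xv'.
- move: Hd Hi Hsz HB; case: u => [|a u'] //; case: v => [|x v'] //= /negbFE av /negbFE xu Hsz HB.
  move: (HB) => /and5P[Uu Uv Uw _ _].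
  move: Uu Uv; rewrite !cons_uniq => /andP[au' _] /andP[xv' _].
  have aw := commW HB (mem_head _ _) av.
  have xw := commW HB xu (mem_head _ _).
  move: HB Uw aw xw; case: w => // l w' HB Uw aw xw /=.
  have [Eal Exl] : a = l /\ x = l.
    case/orP: (memUV HB (mem_head l w')) => H.
      have Eal := headU HB aw H; split=> //.
      by apply: (headV HB xw); rewrite -Eal.
    have Exl := headV HB xw H; split=> //.
    by apply: (headU HB aw); rewrite -Exl.
  subst a x.
  move: Uw; rewrite cons_uniq => /andP[lw' _].
  rewrite T5 // in HB.
  ihh IH HB Hsz n H.
  rewrite T5 //; exact: nin_out H au' xv'.
Qed.


Lemma hd_is_mem (w : seq L) a : hd_is w a -> a \in w.
Proof. by move/hd_isP->; rewrite mem_head. Qed.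

Lemma gap_head a u' x v' w : Betw (a::u') (x::v') w -> a \notin x::v' -> x \notin a::u' ->
  x \in w -> ~~ hd_is w x -> ~~ hd_is w a -> a \notin w.
Proof.
move=> HB Hd Hi xw Hwx Hwa; apply/negP=> aw; move: HB Hwa Hwx xw aw.
case: w => // l w' HB /= la lx xw aw.
case/orP: (memUV HB (mem_head l w')) => H.
  by move: la; rewrite (headU HB aw H) eqxx.
by move: lx; rewrite (headV HB xw H) eqxx.
Qed.

Lemma del_head a u' v w : Betw (a::u') v w -> hins (a::u') v = false ->
  ~~ hd_is w a -> a \notin w.
Proof.
move=> HB Hi Hwa; apply/negP=> aw; move: HB Hwa aw; case: w => // l w' HB /= la aw.
case/orP: (memUV HB (mem_head l w')) => H.
  by move: la; rewrite (headU HB aw H) eqxx.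
move: Hi H HB; case: v => // x v' /= /negbFE xu H HB.
have xw := commW HB xu (mem_head _ _).
have Exl := headV HB xw H; subst l.
by move: la; rewrite (headU HB aw xu) eqxx.
Qed.

Lemma ins_head u x v' w : Betw u (x::v') w -> hdel u (x::v') = false ->
  ~~ hd_is w x -> x \notin w.
Proof.
move=> HB Hd Hwx; apply/negP=> xw; move: HB Hwx xw; case: w => // l w' HB /= lx xw.
case/orP: (memUV HB (mem_head l w')) => H; last first.
  by move: lx; rewrite (headV HB xw H) eqxx.
move: Hd H HB; case: u => // a u' /= /negbFE av H HB.
have aw := commW HB (mem_head _ _) av.
have Eal := headU HB aw H; subst l.
by move: lx; rewrite (headV HB xw av) eqxx.
Qed.

Lemma common_head a u' x v' w : Betw (a::u') (x::v') w -> a \in x::v' -> x \in a::u' ->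
  x = a /\ w = a :: behead w.
Proof.
move=> HB av xu.
have aw := commW HB (mem_head _ _) av.
have xw := commW HB xu (mem_head _ _).
move: HB aw xw; case: w => // l w' HB aw xw /=.
have [Eal Exl] : a = l /\ x = l.
  case/orP: (memUV HB (mem_head l w')) => H.
    have Eal := headU HB aw H; split=> //.
    by apply: (headV HB xw); rewrite -Eal.
  have Exl := headV HB xw H; split=> //.
  by apply: (headU HB aw); rewrite -Exl.
by subst.
Qed.

Lemma phi_xkeep n u x v' w : size u + size (x::v') <= n -> Betw u (x::v') w ->
  x \notin u -> x \in w -> ~~ hd_is w x ->
  (x \in phi n u (x::v') w) && ~~ hd_is (phi n u (x::v') w) x.
Proof.
elim: n u w => [|n IH] u w Hsz HB Hi xw Hwx.
  by rewrite addnS in Hsz.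
case Hd: (hdel u (x::v')); last first.
  by move: (ins_head HB Hd Hwx); rewrite xw.
move: Hd Hsz HB Hi Hwx; case: u => [|a u'] //= Hd Hsz HB Hi Hwx.
rewrite Hd Hi xw /= (negbTE Hwx).
have Aa : isA a := delA HB (mem_head _ _) Hd.
move: (HB) => /and5P[Uu Uv Uw _ _].
move: Uu; rewrite cons_uniq => /andP[au' _].
move: (Hd) (Hi); rewrite !in_cons !negb_or => /andP[ax av'] /andP[xa xu'].
case Hwa: (hd_is w a).
  move: HB Uw xw Hwx; rewrite (hd_isP Hwa) => HB Uw xw Hwx /=.
  move: Uw; rewrite cons_uniq => /andP[aw' Uw'].
  case Hwx2: (hd_is (behead w) x).
    by rewrite !in_cons eqxx orbT ax.
  rewrite T1 // in HB.
  apply: IH => //.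
  - by move: xw; rewrite in_cons (negbTE xa).
  - by rewrite Hwx2.
have aw := gap_head HB Hd Hi xw Hwx (negbT Hwa).
rewrite T2 // in HB.
have /andP[H1 H2] := IH u' w ltac:(clear -Hsz; simpl in *; lia) HB xu' xw Hwx.
by rewrite in_cons H1 orbT /= eq_sym (negbTE xa).
Qed.


Definition cA (s : seq L) := count isA s.
Definition cX (s : seq L) := count isX s.
Lemma nX_of_A (a : L) : isA a -> isX a = false.
Proof. by rewrite isXE => ->. Qed.
Lemma nA_of_X (a : L) : isX a -> isA a = false.
Proof. by rewrite isXE => /negbTE. Qed.

Ltac cnt_close := let H := fresh in move=> H; clear - H; lia.

Lemma phi_count n u v w : size u + size v <= n -> Betw u v w ->
  cX (phi n u v w) + cX w + cA u + cA v = cA (phi n u v w) + cA w + cX u + cX v.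
Proof.
elim: n u v w => [|n IH] u v w.
  by case: u => //; case: v => // _ /Betw_nil ->.
move=> Hsz HB /=.
case Hd: (hdel u v); case Hi: (hins u v) => /=.
- move: Hd Hi Hsz HB; case: u => [|a u'] //; case: v => [|x v'] //= Hd Hi Hsz HB.
  have Aa : isA a := delA HB (mem_head _ _) Hd.
  have Xx : isX x := insX HB (mem_head _ _) Hi.
  move: (HB) => /and5P[Uu Uv Uw _ _].
  move: Uu Uv; rewrite !cons_uniq => /andP[au' _] /andP[xv' _].
  move: (Hd) (Hi); rewrite !in_cons !negb_or => /andP[ax av'] /andP[xa xu'].
  case xw: (x \in w) => /=; last first.
    have HB' : Betw (a::u') v' w by rewrite -(T4 _ Xx xv') ?xw.
    ihh IH HB' Hsz n H; move: H.
    rewrite /cA /cX /= Aa Xx (nX_of_A Aa) (nA_of_X Xx) /=; cnt_close.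
  case Hwx: (hd_is w x).
    move: HB Uw xw; rewrite (hd_isP Hwx) => HB Uw xw /=.
    move: Uw; rewrite cons_uniq => /andP[xw' _].
    rewrite T3 // in HB.
    ihh IH HB Hsz n H; move: H.
    rewrite /cA /cX /= Aa Xx (nX_of_A Aa) (nA_of_X Xx) /=; cnt_close.
  case Hwa: (hd_is w a).
    move: HB Uw xw Hwx; rewrite (hd_isP Hwa) => HB Uw xw Hwx /=.
    move: Uw; rewrite cons_uniq => /andP[aw' Uw'].
    case Hwx2: (hd_is (behead w) x).
      move: HB aw' Uw'; rewrite (hd_isP Hwx2) => HB aw' Uw' /=.
      move: Uw'; rewrite cons_uniq => /andP[xw'' _].
      rewrite T1 // T3 // in HB.
      ihh IH HB Hsz n H; move: H.
      rewrite /cA /cX /= Aa Xx (nX_of_A Aa) (nA_of_X Xx) /=; cnt_close.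
    rewrite T1 // in HB.
    ihh IH HB Hsz n H; move: H.
    rewrite /cA /cX /= Aa Xx (nX_of_A Aa) (nA_of_X Xx) /=; cnt_close.
  have aw := gap_head HB Hd Hi xw (negbT Hwx) (negbT Hwa).
  rewrite T2 // in HB.
  ihh IH HB Hsz n H; move: H.
  rewrite /cA /cX /= Aa Xx (nX_of_A Aa) (nA_of_X Xx) /=; cnt_close.
- move: Hd Hi Hsz HB; case: u => [|a u'] //= Hd Hi Hsz HB.
  have Aa : isA a := delA HB (mem_head _ _) Hd.
  move: (HB) => /and5P[Uu Uv Uw _ _].
  move: Uu; rewrite cons_uniq => /andP[au' _].
  case Hwa: (hd_is w a).
    move: HB Uw; rewrite (hd_isP Hwa) => HB Uw /=.
    move: Uw; rewrite cons_uniq => /andP[aw' Uw'].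
    rewrite T1 // in HB.
    ihh IH HB Hsz n H; move: H.
    rewrite /cA /cX /= Aa (nX_of_A Aa) /=; cnt_close.
  have aw := del_head HB Hi (negbT Hwa).
  rewrite T2 // in HB.
  ihh IH HB Hsz n H; move: H.
  rewrite /cA /cX /= Aa (nX_of_A Aa) /=; cnt_close.
- move: Hd Hi Hsz HB; case: v => [|x v'] //= Hd Hi Hsz HB.
  have Xx : isX x := insX HB (mem_head _ _) Hi.
  move: (HB) => /and5P[Uu Uv Uw _ _].
  move: Uv; rewrite cons_uniq => /andP[xv' _].
  case Hwx: (hd_is w x).
    move: HB Uw; rewrite (hd_isP Hwx) => HB Uw /=.
    move: Uw; rewrite cons_uniq => /andP[xw' Uw'].
    rewrite T3 // in HB.
    ihh IH HB Hsz n H; move: H.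
    rewrite /cA /cX /= Xx (nA_of_X Xx) /=; cnt_close.
  have xw := ins_head HB Hd (negbT Hwx).
  rewrite T4 // in HB.
  ihh IH HB Hsz n H; move: H.
  rewrite /cA /cX /= Xx (nA_of_X Xx) /=; cnt_close.
- move: Hd Hi Hsz HB; case: u => [|a u'].
    case: v => [|x v'] //= _ _ _ /Betw_nil -> //.
  case: v => [|x v'] //= /negbFE av /negbFE xu Hsz HB.
  have [Exa Ew] := common_head HB av xu.
  move: (HB) => /and5P[Uu Uv Uw _ _].
  move: Uu Uv; rewrite !cons_uniq => /andP[au' _] /andP[xv' _].
  subst x; move: HB Uw; rewrite Ew => HB Uw /=.
  move: Uw; rewrite cons_uniq => /andP[aw' _].
  rewrite T5 // in HB.
  ihh IH HB Hsz n H; move: H.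
  rewrite /cA /cX /=; cnt_close.
Qed.


Definition phi_body (f : seq L -> seq L -> seq L -> seq L) (u v w : seq L) : seq L :=
    if hdel u v && hins u v then
      (if u is a :: u' then if v is x :: v' then
         if x \notin w then x :: f u v' w
         else if hd_is w x then f u v' (behead w)
         else if hd_is w a then
           (if hd_is (behead w) x then a :: x :: f u' v' (behead (behead w))
            else f u' v (behead w))
         else a :: f u' v w
       else w else w)
    else if hdel u v then
      (if u is a :: u' then
         (if hd_is w a then f u' v (behead w) else a :: f u' v w) else w)
    else if hins u v then
      (if v is x :: v' then
         (if hd_is w x then f u v' (behead w) else x :: f u v' w) else w)
    else (if u is a :: u' then (if v is _ :: v' then a :: f u' v' (behead w) else w) else w).

Lemma phiS n u v w : phi n.+1 u v w = phi_body (phi n) u v w.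
Proof. by []. Qed.

Lemma hd_is_nin (w : seq L) a : a \notin w -> hd_is w a = false.
Proof. by move=> aw; apply/negP=> /hd_is_mem; rewrite (negbTE aw). Qed.

Lemma phi_inv n u v w : size u + size v <= n -> Betw u v w -> phi n u v (phi n u v w) = w.
Proof.
elim: n u v w => [|n IH] u v w.
  by case: u => //; case: v.
move=> Hsz HB.
case Hd: (hdel u v); case Hi: (hins u v).
- move: Hd Hi Hsz HB; case: u => [|a u'] //; case: v => [|x v'] // Hd Hi Hsz HB.
  have Hd' := Hd; have Hi' := Hi; simpl in Hd', Hi'.
  have Aa : isA a := delA HB (mem_head _ _) Hd'.
  have Xx : isX x := insX HB (mem_head _ _) Hi'.
  move: (HB) => /and5P[Uu Uv Uw _ _].
  move: Uu Uv; rewrite !cons_uniq => /andP[au' _] /andP[xv' _].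
  move: (Hd') (Hi'); rewrite !in_cons !negb_or => /andP[ax av'] /andP[xa xu'].
  case xw: (x \in w); last first.
    have HB' : Betw (a::u') v' w by rewrite -(T4 _ Xx xv') ?xw.
    ihh IH HB' Hsz n H.
    have -> : phi n.+1 (a::u') (x::v') w = x :: phi n (a::u') v' w.
      by rewrite phiS /phi_body Hd Hi /= xw.
    by rewrite phiS /phi_body Hd Hi /= mem_head /= eqxx /= H.
  case Hwx: (hd_is w x).
    move: HB Uw xw; rewrite (hd_isP Hwx) => HB Uw xw.
    move: Uw; rewrite cons_uniq => /andP[xw' _].
    rewrite T3 // in HB.
    ihh IH HB Hsz n H.
    have HP := phi_Betw (ltac:(clear - Hsz; simpl in *; lia) : size (a::u') + size v' <= n) HB.
    have xz := nin_out HP Hi' xv'.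
    have -> : phi n.+1 (a::u') (x::v') (x :: behead w) = phi n (a::u') v' (behead w).
      by rewrite phiS /phi_body Hd Hi /= mem_head /= eqxx.
    by rewrite phiS /phi_body Hd Hi /= xz /= H.
  case Hwa: (hd_is w a).
    move: HB Uw xw Hwx; rewrite (hd_isP Hwa) => HB Uw xw Hwx.
    move: Uw; rewrite cons_uniq => /andP[aw' Uw'].
    case Hwx2: (hd_is (behead w) x).
      move: HB aw' Uw' Hwx xw; rewrite (hd_isP Hwx2) => HB aw' Uw' Hwx xw.
      move: Uw'; rewrite cons_uniq => /andP[xw'' _].
      rewrite T1 // T3 // in HB.
      ihh IH HB Hsz n H.
      have -> : phi n.+1 (a::u') (x::v') [:: a, x & behead (behead w)] =
                [:: a, x & phi n u' v' (behead (behead w))].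
        by rewrite phiS /phi_body Hd Hi /= !inE eqxx orbT /= (negbTE ax) eqxx.
      by rewrite phiS /phi_body Hd Hi /= !inE eqxx orbT /= (negbTE ax) eqxx /= H.
    rewrite T1 // in HB.
    ihh IH HB Hsz n H.
    have HP := phi_Betw (ltac:(clear - Hsz; simpl in *; lia) : size u' + size (x::v') <= n) HB.
    have xw' : x \in behead w by move: xw; rewrite in_cons (negbTE xa).
    have /andP[xz Hzx] := phi_xkeep (ltac:(clear - Hsz; simpl in *; lia) : size u' + size (x::v') <= n) HB xu' xw' (negbT Hwx2).
    have az := hd_is_nin (nin_out HP au' Hd').
    have -> : phi n.+1 (a::u') (x::v') (a :: behead w) = phi n u' (x::v') (behead w).
      by rewrite phiS /phi_body Hd Hi /= xw /= (negbTE ax) eqxx /= Hwx2.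
    by rewrite phiS /phi_body Hd Hi /= xz /= (negbTE Hzx) az H.
  have aw := gap_head HB Hd' Hi' xw (negbT Hwx) (negbT Hwa).
  rewrite T2 // in HB.
  ihh IH HB Hsz n H.
  have /andP[xz Hzx] := phi_xkeep (ltac:(clear - Hsz; simpl in *; lia) : size u' + size (x::v') <= n) HB xu' xw (negbT Hwx).
  have -> : phi n.+1 (a::u') (x::v') w = a :: phi n u' (x::v') w.
    by rewrite phiS /phi_body Hd Hi /= xw /= Hwx Hwa.
  by rewrite phiS /phi_body Hd Hi /= in_cons xz orbT /= (negbTE ax) eqxx /= (negbTE Hzx) H.
- move: Hd Hi Hsz HB; case: u => [|a u'] // Hd Hi Hsz HB.
  have Hd' := Hd; simpl in Hd'.
  have Aa : isA a := delA HB (mem_head _ _) Hd'.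
  move: (HB) => /and5P[Uu Uv Uw _ _].
  move: Uu; rewrite cons_uniq => /andP[au' _].
  case Hwa: (hd_is w a).
    move: HB Uw; rewrite (hd_isP Hwa) => HB Uw.
    move: Uw; rewrite cons_uniq => /andP[aw' Uw'].
    rewrite T1 // in HB.
    ihh IH HB Hsz n H.
    have HP := phi_Betw (ltac:(clear - Hsz; simpl in *; lia) : size u' + size v <= n) HB.
    have az := hd_is_nin (nin_out HP au' Hd').
    have -> : phi n.+1 (a::u') v (a :: behead w) = phi n u' v (behead w).
      by rewrite phiS /phi_body Hd Hi /= eqxx.
    by rewrite phiS /phi_body Hd Hi /= az H.
  have aw := del_head HB Hi (negbT Hwa).
  rewrite T2 // in HB.
  ihh IH HB Hsz n H.
  have -> : phi n.+1 (a::u') v w = a :: phi n u' v w.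
    by rewrite phiS /phi_body Hd Hi /= Hwa.
  by rewrite phiS /phi_body Hd Hi /= eqxx /= H.
- move: Hd Hi Hsz HB; case: v => [|x v'] // Hd Hi Hsz HB.
  have Hi' := Hi; simpl in Hi'.
  have Xx : isX x := insX HB (mem_head _ _) Hi'.
  move: (HB) => /and5P[Uu Uv Uw _ _].
  move: Uv; rewrite cons_uniq => /andP[xv' _].
  case Hwx: (hd_is w x).
    move: HB Uw; rewrite (hd_isP Hwx) => HB Uw.
    move: Uw; rewrite cons_uniq => /andP[xw' Uw'].
    rewrite T3 // in HB.
    ihh IH HB Hsz n H.
    have HP := phi_Betw (ltac:(clear - Hsz; simpl in *; lia) : size u + size v' <= n) HB.
    have xz := hd_is_nin (nin_out HP Hi' xv').
    have -> : phi n.+1 u (x::v') (x :: behead w) = phi n u v' (behead w).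
      by rewrite phiS /phi_body Hd Hi /= eqxx.
    by rewrite phiS /phi_body Hd Hi /= xz H.
  have xw := ins_head HB Hd (negbT Hwx).
  rewrite T4 // in HB.
  ihh IH HB Hsz n H.
  have -> : phi n.+1 u (x::v') w = x :: phi n u v' w.
    by rewrite phiS /phi_body Hd Hi /= Hwx.
  by rewrite phiS /phi_body Hd Hi /= eqxx /= H.
- move: Hd Hi Hsz HB; case: u => [|a u'].
    by case: v => [|x v'] //= _ _ _ HB; rewrite !phiS.
  case: v => [|x v'] // Hd Hi Hsz HB.
  have Hd' := Hd; have Hi' := Hi; simpl in Hd', Hi'.
  move/negbFE: Hd' => av; move/negbFE: Hi' => xu.
  have [Exa Ew] := common_head HB av xu.
  move: (HB) => /and5P[Uu Uv Uw _ _].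
  move: Uu Uv; rewrite !cons_uniq => /andP[au' _] /andP[xv' _].
  subst x; move: HB Uw Hd Hi; rewrite Ew => HB Uw Hd Hi.
  move: Uw; rewrite cons_uniq => /andP[aw' _].
  rewrite T5 // in HB.
  ihh IH HB Hsz n H.
  have -> : phi n.+1 (a::u') (a::v') (a :: behead w) = a :: phi n u' v' (behead w).
    by rewrite phiS /phi_body Hd Hi.
  by rewrite phiS /phi_body Hd Hi /= H.
Qed.


Lemma pmap_filter_subseq (f : L -> option nat) (p : pred L) (s : seq L) :
  subseq (pmap f [seq y <- s | p y]) (pmap f s).
Proof.
elim: s => //= y s IHs; case: (p y) => /=; case: (f y) => //= b.
  by rewrite eqxx.
exact: (subseq_trans IHs (subseq_cons _ _)).
Qed.

Lemma pmap_filter_eq (f : L -> option nat) (p : pred L) (s : seq L) :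
  (forall y, y \in s -> ~~ p y -> f y = None) -> pmap f [seq y <- s | p y] = pmap f s.
Proof.
elim: s => //= y s IHs H.
have IH' : pmap f [seq y <- s | p y] = pmap f s.
  by apply: IHs => z zs; apply: H; rewrite in_cons zs orbT.
case py: (p y) => /=; first by rewrite IH'.
by rewrite (H y (mem_head _ _)) ?py //= IH'.
Qed.

Lemma shuffle_filter (p : pred L) (s : seq L) : shuffle s -> shuffle [seq y <- s | p y].
Proof.
case/and3P=> U SA SX; apply/and3P; split; first exact: filter_uniq.
  apply: (subseq_sorted _ (pmap_filter_subseq _ _ _)); [exact: ltn_trans|]; exact: SA.
apply: (subseq_sorted _ (pmap_filter_subseq _ _ _)); [exact: ltn_trans|]; exact: SX.
Qed.

Lemma shuffle_betw (U V z : seq L) : Betw U V z -> shuffle U -> shuffle V -> shuffle z.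
Proof.
case/and5P=> _ _ Uz /and3P[/allP H1 _ /eqP F1] /and3P[_ /allP H2 /eqP F2].
case/and3P=> _ SA _; case/and3P=> _ _ SX.
apply/and3P; split=> //.
  rewrite -(@pmap_filter_eq _ (fun y => y \in U)); last first.
    move=> y yz yU; case Ay: (isA y); first by rewrite (implyP (H1 y yz) Ay) in yU.
    by move: Ay; rewrite /isA; case: (subA y) => // _ /eqP.
  by rewrite -F1; apply: (subseq_sorted _ (pmap_filter_subseq _ _ _)); [exact: ltn_trans|]; exact: SA.
rewrite -(@pmap_filter_eq _ (fun y => y \in V)); last first.
  move=> y yz yV; case Xy: (isX y); first by rewrite (implyP (H2 y yz) Xy) in yV.
  by move: Xy; rewrite /isX; case: (subX y) => // _ /eqP.
by rewrite F2; apply: (subseq_sorted _ (pmap_filter_subseq _ _ _)); [exact: ltn_trans|]; exact: SX.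
Qed.

Lemma cA_le (z : seq L) : shuffle z -> cA z <= M.
Proof.
case/and3P=> _ SA _.
have -> : cA z = size (pmap (@subA M N) z).
  by rewrite size_pmap /cA /isA; apply: eq_count => y; case: (subA y).
have := @uniq_leq_size _ (pmap (@subA M N) z) (iota 0 M); rewrite size_iota; apply.
  exact: sorted_uniq ltn_trans ltnn _ SA.
move=> y; rewrite mem_pmap => /mapP[l _]; case: l => // i [->].
by rewrite mem_iota /=.
Qed.

Lemma word_inj (w1 w2 : W M N) : word w1 = word w2 -> w1 = w2.
Proof.
move=> E; apply: val_inj.
move: E; rewrite /word /bword_seq; case: (val w1) => n1 t1; case: (val w2) => n2 t2 /= E.
have En : n1 = n2 by apply: val_inj; rewrite /= -(size_tuple t1) -(size_tuple t2) E.
subst n2; congr existT; exact: val_inj.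
Qed.

Lemma exW (s : seq L) : shuffle s -> exists w : W M N, word w = s.
Proof.
move=> Hs; have Hsz : size s < (M + N).+1.
  have Us : uniq s by case/and3P: Hs.
  rewrite ltnS -(card_uniqP Us); apply: leq_trans (max_card _) _.
  by rewrite card_sum !card_ord.
by exists (exist _ (existT _ (Ordinal Hsz) (in_tuple s)) Hs).
Qed.

Lemma word_shuffle (w : W M N) : shuffle (word w).
Proof. exact: valP w. Qed.

Lemma cov_le (w1 w2 : W M N) : covered w1 w2 -> le (word w1) (word w2).
Proof.
have U1 := word_shuffle w1; have U2 := word_shuffle w2.
case/and3P: U1 => U1 _ _; case/and3P: U2 => U2 _ _.
case/orP=> /existsP[i /andP[_ /eqP E]].
  by rewrite E rem_filter //; apply: le_del.
by rewrite E rem_filter //; apply: le_ins.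
Qed.

Lemma shle_le (u w : W M N) : shle u w -> le (word u) (word w).
Proof.
move/connectP=> [p pth ->]; elim: p u pth => /= [|y p IHp] u; first by rewrite le_refl.
case/andP=> cuy pth; exact: le_trans (cov_le cuy) (IHp _ pth).
Qed.

Lemma count_strict (a b : pred L) (s : seq L) (l : L) :
  l \in s -> a l -> ~~ b l -> subpred b a -> count b s < count a s.
Proof.
move=> ls al bl sub.
rewrite (permP (perm_to_rem ls) a) (permP (perm_to_rem ls) b) /= al (negbTE bl).
by rewrite add0n add1n ltnS sub_count.
Qed.

Lemma le_shle_k k (u w : W M N) :
  count (fun y => y \notin word w) (word u) + count (fun y => y \notin word u) (word w) <= k ->
  le (word u) (word w) -> shle u w.
Proof.
elim: k u w => [|k IH] u w Hk Hle.
- have E1 : count (fun y => y \notin word w) (word u) = 0 by lia.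
  have E2 : count (fun y => y \notin word u) (word w) = 0 by lia.
  have {}E1 : all (fun y => y \in word w) (word u).
    apply/allP=> y yu; move/eqP: E1; rewrite -leqn0 leqNgt -has_count => /hasPn/(_ y yu).
    by rewrite negbK.
  have {}E2 : all (fun y => y \in word u) (word w).
    apply/allP=> y yw; move/eqP: E2; rewrite -leqn0 leqNgt -has_count => /hasPn/(_ y yw).
    by rewrite negbK.
  case/and3P: Hle => _ _ /eqP F.
  move/all_filterP: E1 => E1; move/all_filterP: E2 => E2.
  have -> : u = w by apply: word_inj; rewrite -E1 F E2.
  exact: connect0.
have Su := word_shuffle u; have Sw := word_shuffle w.
have Uu : uniq (word u) by case/and3P: Su.
have Uw : uniq (word w) by case/and3P: Sw.
case/and3P: (Hle) => /allP HA /allP HX /eqP F.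
case E1: (has (fun y => y \notin word w) (word u)).
  case/hasP: E1 => l lu lw.
  have Al : isA l by case Xl: (isA l) => //; move: (HX l lu); rewrite isXE Xl /= (negbTE lw).
  have [u1 Eu1] := exW (shuffle_filter (predC1 l) Su).
  have cov : covered u u1.
    have [i Ei] : exists i, l = inl i by case: (l) Al => // i _; exists i.
    apply/orP; left; apply/existsP; exists i; by rewrite -Ei lu Eu1 rem_filter // eqxx.
  apply: connect_trans (connect1 cov) _.
  apply: IH.
    rewrite Eu1 count_filter.
    have -> : count (fun y => y \notin [seq y0 <- word u | predC1 l y0]) (word w)
            = count (fun y => y \notin word u) (word w).
      apply: eq_in_count => y yw /=; rewrite mem_filter /=.
      by case: eqP => // E; rewrite -E yw in lw.
    have H : count (predI (fun y => y \notin word w) (predC1 l)) (word u) < count (fun y => y \notin word w) (word u).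
      apply: (count_strict lu lw); first by rewrite /= eqxx andbF.
      by move=> y /andP[].
    rewrite -ltnS; apply: leq_trans Hk; rewrite -addSn leq_add2r; exact: H.
  rewrite Eu1; apply/and3P; split.
  - apply/allP=> y yw; apply/implyP=> Ay; rewrite mem_filter (implyP (HA y yw) Ay) andbT /=.
    by apply/eqP=> E; rewrite -E yw in lw.
  - by apply/allP=> y; rewrite mem_filter => /andP[_ yu]; exact: HX.
  - apply/eqP; rewrite -filter_predI.
    have -> : [seq y <- word w | y \in [seq y0 <- word u | predC1 l y0]] = [seq y <- word w | y \in word u].
      apply: eq_in_filter => y yw; rewrite mem_filter /=.
      by case: eqP => // E; rewrite -E yw in lw.
    rewrite -F; apply: eq_in_filter => y yu /=.
    case: (eqVneq y l) => [->|yl]; first by rewrite (negbTE lw).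
    by rewrite /= andbT.
have E0 : count (fun y => y \notin word w) (word u) = 0.
  by apply/eqP; rewrite -leqn0 leqNgt -has_count E1.
case E2: (has (fun y => y \notin word u) (word w)); last first.
  have E3 : count (fun y => y \notin word u) (word w) = 0.
    by apply/eqP; rewrite -leqn0 leqNgt -has_count E2.
  by apply: IH => //; rewrite E0 E3.
case/hasP: E2 => m mw mu.
have Xm : isX m by rewrite isXE; apply/negP=> Am; rewrite (implyP (HA m mw) Am) in mu.
pose P := fun y => (y \in word u) || (y == m).
have [u1 Eu1] := exW (shuffle_filter P Sw).
have U1 : uniq (word u1) by rewrite Eu1 filter_uniq.
have cov : covered u u1.
  have [j Ej] : exists j, m = inr j by case: (m) Xm => // j _; exists j.
  apply/orP; right.
  apply/existsP; exists j; rewrite -Ej; apply/andP; split.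
    by rewrite Eu1 mem_filter mw andbT /P eqxx orbT.
  rewrite Eu1 rem_filter ?filter_uniq // -filter_predI.
  have -> : [seq x <- word w | predI (predC1 m) P x] = [seq x <- word w | x \in word u].
    apply: eq_filter => y /=; rewrite /P.
    by case: eqP => [->|_] /=; rewrite ?(negbTE mu) ?orbF.
  rewrite -F; apply/eqP; symmetry; apply/all_filterP.
  apply/allP=> y yu; move/eqP: E0; rewrite -leqn0 leqNgt -has_count => /hasPn/(_ y yu).
  by rewrite negbK.
apply: connect_trans (connect1 cov) _.
have sub1 : {subset word u1 <= word w} by move=> y; rewrite Eu1 mem_filter => /andP[].
apply: IH.
  have -> : count (fun y => y \notin word w) (word u1) = 0.
    by rewrite (eq_in_count (a2 := pred0)) ?count_pred0 // => y /sub1 ->.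
  have -> : count (fun y => y \notin word u1) (word w) = count (fun y => ~~ P y) (word w).
    by apply: eq_in_count => y yw; rewrite Eu1 mem_filter yw andbT.
  have H : count (fun y => ~~ P y) (word w) < count (fun y => y \notin word u) (word w).
    apply: (count_strict mw mu); first by rewrite /P eqxx orbT.
    by move=> y; rewrite /P negb_or => /andP[].
  rewrite add0n -ltnS; apply: leq_trans Hk; rewrite E0 add0n; exact: H.
apply/and3P; split.
- apply/allP=> y yw; apply/implyP=> Ay; rewrite Eu1 mem_filter yw andbT /P.
  by rewrite (implyP (HA y yw) Ay).
- by apply/allP=> y /sub1 ->; rewrite implybT.
- apply/eqP; rewrite (eq_in_filter (a2 := predT)); last by move=> y /sub1 ->.
  rewrite filter_predT Eu1; apply: eq_in_filter => y yw.
  by rewrite mem_filter yw andbT.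
Qed.

Lemma le_shle (u w : W M N) : le (word u) (word w) -> shle u w.
Proof. exact: le_shle_k (leqnn _). Qed.


Definition Phi (u v w : W M N) : W M N :=
  if shle u w && shle w v then
    odflt w [pick w' | word w' == phi (size (word u) + size (word v)) (word u) (word v) (word w)]
  else w.

Lemma Betw_of (u v w : W M N) : shle u w -> shle w v -> Betw (word u) (word v) (word w).
Proof.
move=> H1 H2; apply/and5P; split; try exact: shle_le.
- by case/and3P: (word_shuffle u).
- by case/and3P: (word_shuffle v).
- by case/and3P: (word_shuffle w).
Qed.

Lemma Phi_in (u v w : W M N) : shle u w -> shle w v ->
  [/\ word (Phi u v w) = phi (size (word u) + size (word v)) (word u) (word v) (word w),
      shle u (Phi u v w) & shle (Phi u v w) v].
Proof.
move=> H1 H2; have HB := Betw_of H1 H2.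
have HBz := phi_Betw (leqnn _) HB.
have Sz := shuffle_betw HBz (word_shuffle u) (word_shuffle v).
have [w1 E1] := exW Sz.
rewrite /Phi H1 H2 /=; case: pickP => [w' /eqP Ew' | /(_ w1)]; last by rewrite E1 eqxx.
move: HBz; rewrite -Ew' => /and5P[_ _ _ L1 L2].
by split=> //; apply: le_shle.
Qed.

Lemma Phi_inv (u v : W M N) : cancel (Phi u v) (Phi u v).
Proof.
move=> w; case H: (shle u w && shle w v); last by rewrite /Phi H H.
case/andP: H => H1 H2; have [E S1 S2] := Phi_in H1 H2.
have [E' _ _] := Phi_in S1 S2.
by apply: word_inj; rewrite E' E phi_inv // Betw_of.
Qed.

Lemma arith (K a b c d xa xb xc xd : nat) : a <= K -> b <= K -> c <= K -> d <= K ->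
  xa + xb + c + d = a + b + xc + xd -> (K - a + xa) + (K - b + xb) = (K - c + xc) + (K - d + xd).
Proof. lia. Qed.

Lemma Phi_rho (u v w : W M N) : shle u w -> shle w v -> rho (Phi u v w) + rho w = rho u + rho v.
Proof.
move=> H1 H2; have [E S1 S2] := Phi_in H1 H2.
have C := phi_count (leqnn _) (Betw_of H1 H2); rewrite -E in C.
exact: (arith (cA_le (word_shuffle _)) (cA_le (word_shuffle _)) (cA_le (word_shuffle _))
          (cA_le (word_shuffle _)) C).
Qed.

Lemma main_card (u v : W M N) r :
  #|[set w : W M N | [&& shle u w, shle w v & rho w == rho u + r]]| =
  #|[set w : W M N | [&& shle u w, shle w v & rho w + r == rho v]]|.
Proof.
have inj : injective (Phi u v) := can_inj (Phi_inv u v).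
set A := [set w : W M N | _]; set B := [set w : W M N | _].
have AB : Phi u v @: A \subset B.
  apply/subsetP=> y /imsetP[w wA ->]; move: wA; rewrite !inE => /and3P[H1 H2 /eqP Hr].
  have [_ S1 S2] := Phi_in H1 H2; have R := Phi_rho H1 H2.
  rewrite S1 S2 /=; apply/eqP; move: R Hr; clear; lia.
have BA : Phi u v @: B \subset A.
  apply/subsetP=> y /imsetP[w wB ->]; move: wB; rewrite !inE => /and3P[H1 H2 /eqP Hr].
  have [_ S1 S2] := Phi_in H1 H2; have R := Phi_rho H1 H2.
  rewrite S1 S2 /=; apply/eqP; move: R Hr; clear; lia.
apply/eqP; rewrite eqn_leq; apply/andP; split.
  by rewrite -(card_imset A inj); apply: subset_leq_card.
by rewrite -(card_imset B inj); apply: subset_leq_card.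
Qed.

End Main.

Theorem proposition2p4 (M N : nat) (u v : W M N) :
  shle u v ->
  forall r : nat,
    #|[set w : W M N | [&& shle u w, shle w v & rho w == rho u + r]]| =
    #|[set w : W M N | [&& shle u w, shle w v & rho w + r == rho v]]|.
Proof. by move=> _ r; apply: main_card. Qed.
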